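(* Let $s$ be a real number with $\frac32<s\le 2$, let $\alpha,\beta>0$ be fixed, and let $K>0$. Suppose that for each $n$ (in an infinite set of natural numbers) $P_n\subset[0,1]^2$ is a set of $n$ points that is $s$-adaptable with constant $K$. Then there exist constants $C,N>0$, independent of $n$, such that for all such $n>N$, $$|\Pi_{\alpha,\beta}(P_n)|\le C\, n^{\frac43+\frac1s}\log n .$$
   Context: For a finite set $P\subset\mathbb R^2$ and real numbers $\alpha,\beta$, define the set of ordered triples $$\Pi_{\alpha,\beta}(P)=\{(p,q,r)\in P\times P\times P:\ p\cdot q=\alpha \text{ and } p\cdot r=\beta\},$$ where $\cdot$ is the standard dot product on $\mathbb R^2$ (the points $p,q,r$ need not be distinct). A set $P\subset[0,1]^2$ of $n$ points is called $s$-adaptable with constant $K$ if it satisfies (energy) $\displaystyle \frac{1}{\binom n2}\sum_{p,q\in P,\ p\neq q}|p-q|^{-s}\le K$, and (separation) $\min\{|p-q|:\ p,q\in P,\ p\neq q\}\ge n^{-1/s}$, where $|\cdot|$ is the Euclidean norm. *)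

(* Defs.v *)
From Stdlib Require Import Reals Lra List Bool.
Import ListNotations.
Open Scope R_scope.
Local Open Scope bool_scope.

Definition pt := (R * R)%type.

Definition dot (p q : pt) : R := fst p * fst q + snd p * snd q.

Definition norm2 (p q : pt) : R :=
  sqrt ((fst p - fst q) ^ 2 + (snd p - snd q) ^ 2).

Definition Reqb (a b : R) : bool := if Req_EM_T a b then true else false.

Definition pt_eqb (p q : pt) : bool := Reqb (fst p) (fst q) && Reqb (snd p) (snd q).

Definition Pi_set (alpha beta : R) (P : list pt) : list (pt * pt * pt) :=
  filter (fun t => match t with (p, q, r) => Reqb (dot p q) alpha && Reqb (dot p r) beta end)
         (list_prod (list_prod P P) P).

Definition Pi_card (alpha beta : R) (P : list pt) : nat := length (Pi_set alpha beta P).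

Definition energy_sum (s : R) (P : list pt) : R :=
  fold_right Rplus 0
    (map (fun pq => if pt_eqb (fst pq) (snd pq) then 0 else Rpower (norm2 (fst pq) (snd pq)) (- s))
         (list_prod P P)).

Definition in_unit_square (p : pt) : Prop := 0 <= fst p <= 1 /\ 0 <= snd p <= 1.

Definition s_adaptable (s K : R) (n : nat) (P : list pt) : Prop :=
  NoDup P /\ length P = n /\ (forall p, In p P -> in_unit_square p) /\
  (/ C n 2) * energy_sum s P <= K /\
  (forall p q, In p P -> In q P -> p <> q -> Rpower (INR n) (- (1 / s)) <= norm2 p q).

(* Main.v *)
Require Import Defs.
From Stdlib Require Import Reals List.
From Stdlib Require Import Lra Lia ZArith Bool.
Import ListNotations.
Open Scope R_scope.

Fixpoint nsum {A} (f : A -> nat) (l : list A) : nat :=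
  match l with [] => 0%nat | x :: l' => (f x + nsum f l')%nat end.

Definition cnt {A} (h : A -> bool) (l : list A) : nat := length (filter h l).

Definition ib (b : bool) : nat := if b then 1%nat else 0%nat.

Lemma cnt_nsum {A} (h : A -> bool) l : cnt h l = nsum (fun x => ib (h x)) l.
Proof. unfold cnt, ib; induction l; simpl; auto. destruct (h a); simpl; lia. Qed.

Lemma nsum_app {A} (f : A -> nat) l1 l2 : nsum f (l1 ++ l2) = (nsum f l1 + nsum f l2)%nat.
Proof. induction l1; simpl; lia. Qed.

Lemma nsum_map {A B} (f : B -> nat) (g : A -> B) l : nsum f (map g l) = nsum (fun x => f (g x)) l.
Proof. induction l; simpl; lia. Qed.

Lemma nsum_prod {A B} (f : A * B -> nat) l l' :
  nsum f (list_prod l l') = nsum (fun x => nsum (fun y => f (x, y)) l') l.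
Proof. induction l; simpl; auto. rewrite nsum_app, nsum_map. lia. Qed.

Lemma nsum_le {A} (f g : A -> nat) l : (forall x, In x l -> (f x <= g x)%nat) -> (nsum f l <= nsum g l)%nat.
Proof. induction l; simpl; intros H; auto.
  assert (nsum f l <= nsum g l)%nat by (apply IHl; auto).
  specialize (H a (or_introl eq_refl)). lia. Qed.

Lemma nsum_ext {A} (f g : A -> nat) l : (forall x, In x l -> f x = g x) -> nsum f l = nsum g l.
Proof. induction l as [|a l IH]; simpl; intros H; [reflexivity|]. rewrite (H a) by auto. rewrite IH by auto. reflexivity. Qed.

Lemma nsum_add {A} (f g : A -> nat) l : nsum (fun x => f x + g x)%nat l = (nsum f l + nsum g l)%nat.
Proof. induction l; simpl; lia. Qed.

Lemma nsum_mul_l {A} c (f : A -> nat) l : nsum (fun x => c * f x)%nat l = (c * nsum f l)%nat.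
Proof. induction l; simpl; lia. Qed.

Lemma nsum_mul_r {A} c (f : A -> nat) l : nsum (fun x => f x * c)%nat l = (nsum f l * c)%nat.
Proof. induction l; simpl; lia. Qed.

Lemma nsum_zero {A} (l : list A) : nsum (fun _ => 0%nat) l = 0%nat.
Proof. induction l; simpl; lia. Qed.

Lemma nsum_one {A} (l : list A) : nsum (fun _ => 1%nat) l = length l.
Proof. induction l; simpl; lia. Qed.

Lemma nsum_swap {A B} (f : A -> B -> nat) l l' :
  nsum (fun x => nsum (fun y => f x y) l') l = nsum (fun y => nsum (fun x => f x y) l) l'.
Proof. induction l; simpl. rewrite nsum_zero; auto. rewrite IHl, <- nsum_add. auto. Qed.

Lemma nsum_filter {A} (f : A -> nat) h l : nsum f (filter h l) = nsum (fun x => if h x then f x else 0%nat) l.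
Proof. induction l; simpl; auto. destruct (h a); simpl; lia. Qed.

Lemma cs_list {A} (f : A -> nat) l : (nsum f l * nsum f l <= length l * nsum (fun x => f x * f x) l)%nat.
Proof.
  induction l; simpl; auto.
  set (Sm := nsum f l) in *. set (Q := nsum (fun x => (f x * f x)%nat) l) in *.
  set (L := length l) in *. set (a0 := f a).
  destruct L as [|L'] eqn:HL.
  - assert (Sm = 0%nat) by nia. rewrite H. nia.
  - pose proof (Z.square_nonneg (Z.of_nat (S L') * Z.of_nat a0 - Z.of_nat Sm)).
    assert (2 * a0 * Sm <= S L' * a0 * a0 + Q)%nat.
    { destruct (le_lt_dec (2 * a0 * Sm) (S L' * a0 * a0 + Q)) as [h|h]; auto.
      exfalso. assert (S L' * (S L' * a0 * a0 + Q) < S L' * (2 * a0 * Sm))%nat by nia. nia. }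
    nia.
Qed.

Lemma ind_seq_lt m : forall a v, (v < a)%nat -> nsum (fun k => ib (Nat.eqb v k)) (seq a m) = 0%nat.
Proof. induction m; intros; simpl; auto. rewrite IHm by lia.
  destruct (Nat.eqb_spec v a); [lia|]. reflexivity. Qed.

Lemma ind_seq m : forall a v, (a <= v < a + m)%nat -> nsum (fun k => ib (Nat.eqb v k)) (seq a m) = 1%nat.
Proof. induction m; intros; simpl. lia.
  destruct (Nat.eqb_spec v a).
  - subst. rewrite ind_seq_lt by lia. reflexivity.
  - rewrite IHm by lia. reflexivity. Qed.

Lemma cs_bins {A} (g : A -> nat) M l : (forall x, In x l -> (g x < M)%nat) ->
  (length l * length l <= M * cnt (fun xy => Nat.eqb (g (fst xy)) (g (snd xy))) (list_prod l l))%nat.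
Proof.
  intros Hg.
  set (c := fun k => nsum (fun x => ib (Nat.eqb (g x) k)) l).
  assert (E1 : length l = nsum c (seq 0 M)).
  { rewrite <- nsum_one. unfold c. rewrite <- nsum_swap.
    apply nsum_ext. intros x Hx. rewrite ind_seq; auto. specialize (Hg x Hx). lia. }
  assert (E2 : cnt (fun xy => Nat.eqb (g (fst xy)) (g (snd xy))) (list_prod l l)
              = nsum (fun k => c k * c k)%nat (seq 0 M)).
  { rewrite cnt_nsum, nsum_prod. simpl.
    transitivity (nsum (fun x => nsum (fun y => nsum (fun k => ib (Nat.eqb (g x) k) * ib (Nat.eqb (g y) k)) (seq 0 M)) l) l)%nat.
    { apply nsum_ext; intros x Hx. apply nsum_ext; intros y Hy.
      destruct (Nat.eqb_spec (g x) (g y)) as [e|e].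
      - rewrite <- e. rewrite <- (ind_seq M 0 (g x)) at 1 by (specialize (Hg x Hx); lia).
        apply nsum_ext; intros k _. destruct (Nat.eqb (g x) k); simpl; lia.
      - simpl ib. symmetry. rewrite (nsum_ext _ (fun _ => 0%nat)). apply nsum_zero.
        intros k _. destruct (Nat.eqb_spec (g x) k), (Nat.eqb_spec (g y) k); simpl; try lia. }
    rewrite (nsum_ext _ (fun x => nsum (fun k => ib (Nat.eqb (g x) k) * c k) (seq 0 M))%nat).
    2:{ intros x _. rewrite nsum_swap. apply nsum_ext; intros k _. unfold c. rewrite nsum_mul_l. reflexivity. }
    rewrite nsum_swap. apply nsum_ext; intros k _. rewrite nsum_mul_r. reflexivity. }
  rewrite E1, E2. pose proof (cs_list c (seq 0 M)). rewrite length_seq in H. exact H.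
Qed.

Definition Rleb (a b : R) : bool := if Rle_dec a b then true else false.
Definition closeb (r : R) (qq : pt * pt) : bool :=
  negb (pt_eqb (fst qq) (snd qq)) && Rleb (norm2 (fst qq) (snd qq)) r.
Definition lineb (g : R) (p q : pt) : bool := Reqb (dot p q) g.
Definition coord (p q : pt) : R := if Rle_dec (Rabs (fst p)) (Rabs (snd p)) then fst q else snd q.
Definition bin (B : nat) (p q : pt) : nat := Z.to_nat (up (INR B * coord p q)).

Lemma Reqb_spec a b : Reqb a b = true <-> a = b.
Proof. unfold Reqb. destruct (Req_EM_T a b); split; intros; congruence. Qed.

Lemma pt_eqb_spec p q : pt_eqb p q = true <-> p = q.
Proof. destruct p as [a b], q as [c d]. unfold pt_eqb; simpl.
  rewrite andb_true_iff, !Reqb_spec. split; [intros [-> ->]; auto| intros H; inversion H; auto]. Qed.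

Lemma Rleb_spec a b : Rleb a b = true <-> a <= b.
Proof. unfold Rleb. destruct (Rle_dec a b); split; intros; auto; try congruence; contradiction. Qed.

Lemma cnt_zero {A} (h : A -> bool) l : (forall y, In y l -> h y = false) -> cnt h l = 0%nat.
Proof. unfold cnt. induction l; simpl; intros H; auto. rewrite H by auto. apply IHl; auto. Qed.

Lemma cnt_le1 {A} (h : A -> bool) l : NoDup l ->
  (forall x y, In x l -> In y l -> h x = true -> h y = true -> x = y) -> (cnt h l <= 1)%nat.
Proof.
  induction 1 as [|a l Ha Hnd IH]; intros Hu; unfold cnt in *; simpl; auto.
  destruct (h a) eqn:E.
  - simpl. assert (length (filter h l) = 0%nat); [|lia].
    apply (cnt_zero h l). intros y Hy. destruct (h y) eqn:E2; auto.
    exfalso. assert (a = y) by (apply Hu; simpl; auto). subst; contradiction.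
  - apply IH. intros; apply Hu; simpl; auto.
Qed.

Lemma cnt_split {A} (h h1 h2 : A -> bool) l : (forall x, h x = true -> h1 x || h2 x = true) ->
  (cnt h l <= cnt h1 l + cnt h2 l)%nat.
Proof. intros H. rewrite !cnt_nsum, <- nsum_add. apply nsum_le. intros x _.
  specialize (H x). destruct (h x), (h1 x), (h2 x); simpl in *; try lia; try (specialize (H eq_refl); discriminate). Qed.

Lemma cnt_mono {A} (h h' : A -> bool) l : (forall x, In x l -> h x = true -> h' x = true) ->
  (cnt h l <= cnt h' l)%nat.
Proof. intros H. rewrite !cnt_nsum. apply nsum_le. intros x Hx.
  specialize (H x Hx). destruct (h x), (h' x); simpl in *; try lia; try (specialize (H eq_refl); discriminate). Qed.

Lemma cnt_prod_filter {A} (f : A -> bool) (h : A * A -> bool) l :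
  cnt h (list_prod (filter f l) (filter f l)) =
  nsum (fun xy => ib (f (fst xy) && f (snd xy) && h xy)) (list_prod l l).
Proof.
  rewrite cnt_nsum, !nsum_prod, nsum_filter. apply nsum_ext; intros x _.
  rewrite nsum_filter. cbn [fst snd]. destruct (f x); simpl.
  - apply nsum_ext; intros y _. destruct (f y); simpl; reflexivity.
  - symmetry. apply nsum_zero.
Qed.

Lemma coord_unit p q : in_unit_square q -> 0 <= coord p q <= 1.
Proof. unfold coord, in_unit_square; destruct (Rle_dec _ _); tauto. Qed.

Lemma bin_lt B p q : in_unit_square q -> (bin B p q < B + 2)%nat.
Proof.
  intros Hq. pose proof (coord_unit p q Hq). unfold bin.
  set (x := INR B * coord p q).
  assert (0 <= x <= INR B). { unfold x. pose proof (pos_INR B). nra. }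
  destruct (archimed x) as [h1 h2].
  assert (IZR (up x) <= IZR (Z.of_nat B) + 1) by (rewrite <- INR_IZR_INZ; lra).
  assert (up x <= Z.of_nat B + 1)%Z. { apply le_IZR. rewrite plus_IZR. simpl. lra. }
  lia.
Qed.

Lemma bin_eq B p q q' : in_unit_square q -> in_unit_square q' -> bin B p q = bin B p q' ->
  Rabs (INR B * coord p q - INR B * coord p q') < 1.
Proof.
  intros Hq Hq' E. pose proof (coord_unit p q Hq). pose proof (coord_unit p q' Hq'). unfold bin in E.
  pose proof (pos_INR B).
  set (x := INR B * coord p q) in *. set (y := INR B * coord p q') in *.
  assert (0 <= x) by (unfold x; nra). assert (0 <= y) by (unfold y; nra).
  destruct (archimed x) as [h1 h2]. destruct (archimed y) as [h3 h4].
  assert (0 < up x)%Z by (apply lt_IZR; simpl; lra).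
  assert (0 < up y)%Z by (apply lt_IZR; simpl; lra).
  apply Z2Nat.inj in E; try lia. rewrite E in *.
  unfold Rabs; destruct (Rcase_abs _); lra.
Qed.

Lemma coord_geom g p q q' : 0 < g -> dot p q = g -> dot p q' = g ->
  (fst q - fst q') ^ 2 + (snd q - snd q') ^ 2 <= 2 * (coord p q - coord p q') ^ 2.
Proof.
  destruct p as [p1 p2], q as [x y], q' as [x' y']. unfold dot, coord; simpl. intros Hg E1 E2.
  assert (L : p1 * (x - x') + p2 * (y - y') = 0) by lra.
  destruct (Rle_dec (Rabs p1) (Rabs p2)) as [h|h].
  - pose proof (Rsqr_le_abs_1 _ _ h). unfold Rsqr in H.
    assert (p2 <> 0). { intro e. subst. assert (p1 = 0). { rewrite Rabs_R0 in h. pose proof (Rabs_pos p1).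
      destruct (Rcase_abs p1); [rewrite Rabs_left in h by auto | rewrite Rabs_right in h by auto]; lra. } subst. lra. }
    assert (p2 * p2 * ((y - y') * (y - y')) <= p2 * p2 * ((x - x') * (x - x'))).
    { assert (p2 * (y - y') = - (p1 * (x - x'))) by lra.
      replace (p2 * p2 * ((y - y') * (y - y'))) with ((p2 * (y - y')) * (p2 * (y - y'))) by ring.
      rewrite H1. pose proof (Rle_0_sqr (x - x')). unfold Rsqr in H2.
      pose proof (Rmult_le_compat_r _ _ _ H2 H). nra. }
    assert (0 < p2 * p2) by (destruct (Rtotal_order p2 0) as [hh|[hh|hh]]; [nra|contradiction|nra]).
    assert ((y - y') * (y - y') <= (x - x') * (x - x')) by (apply (Rmult_le_reg_l (p2*p2)); auto).
    nra.
  - assert (Rabs p2 <= Rabs p1) by lra.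
    pose proof (Rsqr_le_abs_1 _ _ H). unfold Rsqr in H0.
    assert (p1 <> 0). { intro e. subst. rewrite Rabs_R0 in h. pose proof (Rabs_pos p2). lra. }
    assert (p1 * p1 * ((x - x') * (x - x')) <= p1 * p1 * ((y - y') * (y - y'))).
    { assert (p1 * (x - x') = - (p2 * (y - y'))) by lra.
      replace (p1 * p1 * ((x - x') * (x - x'))) with ((p1 * (x - x')) * (p1 * (x - x'))) by ring.
      rewrite H2. pose proof (Rle_0_sqr (y - y')). unfold Rsqr in H3.
      pose proof (Rmult_le_compat_r _ _ _ H3 H0). nra. }
    assert (0 < p1 * p1) by nra.
    assert ((x - x') * (x - x') <= (y - y') * (y - y')) by (apply (Rmult_le_reg_l (p1*p1)); auto).
    nra.
Qed.

Lemma geom g B r p q q' : 0 < g -> 1 <= INR B -> 0 < r -> 2 <= r ^ 2 * INR B ^ 2 ->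
  in_unit_square q -> in_unit_square q' -> dot p q = g -> dot p q' = g ->
  bin B p q = bin B p q' -> norm2 q q' <= r.
Proof.
  intros Hg HB Hr Hr2 Hq Hq' E1 E2 Eb.
  pose proof (bin_eq B p q q' Hq Hq' Eb) as Ha.
  pose proof (coord_geom g p q q' Hg E1 E2) as Hc.
  set (d := coord p q - coord p q') in *.
  assert (Hd : INR B ^ 2 * d ^ 2 < 1).
  { replace (INR B * coord p q - INR B * coord p q') with (INR B * d) in Ha by (unfold d; ring).
    assert (Rabs (INR B * d) * Rabs (INR B * d) < 1).
    { pose proof (Rabs_pos (INR B * d)). nra. }
    rewrite <- Rabs_mult in H. rewrite Rabs_right in H by nra. nra. }
  set (X := (fst q - fst q') ^ 2 + (snd q - snd q') ^ 2) in *.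
  assert (X <= r * r).
  { assert (INR B ^ 2 * X < INR B ^ 2 * (r * r)).
    { assert (0 <= INR B ^ 2) by nra. nra. }
    apply Rlt_le. apply (Rmult_lt_reg_l (INR B ^ 2)); auto. nra. }
  unfold norm2. fold X. rewrite <- (sqrt_square r) by lra. apply sqrt_le_1_alt. auto.
Qed.

Lemma uniq_p g p p' q q' : g <> 0 -> dot p q = g -> dot p q' = g -> dot p' q = g -> dot p' q' = g ->
  q <> q' -> p = p'.
Proof.
  destruct p as [p1 p2], p' as [r1 r2], q as [x y], q' as [x' y']. unfold dot; simpl.
  intros Hg E1 E2 E3 E4 Hne.
  assert (Hdet : x * y' - y * x' <> 0).
  { intro Hd. apply Hne.
    assert (A1 : (x' - x) * g = x * (p1 * (x' - x) + p2 * (y' - y)) + p2 * (y * (x' - x) - x * (y' - y))).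
    { rewrite <- E1. ring. }
    assert (A2 : (y' - y) * g = y * (p1 * (x' - x) + p2 * (y' - y)) + p1 * (x * (y' - y) - y * (x' - x))).
    { rewrite <- E1. ring. }
    assert (p1 * (x' - x) + p2 * (y' - y) = 0) by lra.
    assert (y * (x' - x) - x * (y' - y) = 0) by lra.
    rewrite H, H0 in A1. assert (H1 : x * (y' - y) - y * (x' - x) = 0) by lra. rewrite H, H1 in A2.
    assert (x' - x = 0). { apply (Rmult_eq_reg_r g); auto. lra. }
    assert (y' - y = 0). { apply (Rmult_eq_reg_r g); auto. lra. }
    f_equal; lra. }
  set (u1 := p1 - r1). set (u2 := p2 - r2).
  assert (U1 : u1 * x + u2 * y = 0) by (unfold u1, u2; lra).
  assert (U2 : u1 * x' + u2 * y' = 0) by (unfold u1, u2; lra).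
  assert (u1 * (x * y' - y * x') = 0).
  { replace (u1 * (x * y' - y * x')) with (y' * (u1 * x + u2 * y) - y * (u1 * x' + u2 * y')) by ring.
    rewrite U1, U2. ring. }
  assert (u2 * (x * y' - y * x') = 0).
  { replace (u2 * (x * y' - y * x')) with (x * (u1 * x' + u2 * y') - x' * (u1 * x + u2 * y)) by ring.
    rewrite U1, U2. ring. }
  apply Rmult_integral in H. apply Rmult_integral in H0.
  destruct H; [|contradiction]. destruct H0; [|contradiction].
  unfold u1, u2 in *. f_equal; lra.
Qed.

Lemma Xbound g B r P : 0 < g -> NoDup P -> (forall q, In q P -> in_unit_square q) ->
  1 <= INR B -> 0 < r -> 2 <= r ^ 2 * INR B ^ 2 ->
  (nsum (fun p => cnt (lineb g p) P * cnt (lineb g p) P) P <=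
   4 * (B + 2) * (B + 2) * length P + 2 * (B + 2) * cnt (closeb r) (list_prod P P))%nat.
Proof.
  intros Hg Hnd Hsq HB Hr Hr2.
  set (M := (B + 2)%nat).
  set (Ep := fun p => nsum (fun xy => ib (lineb g p (fst xy) && lineb g p (snd xy) && closeb r xy)) (list_prod P P)).
  assert (step1 : forall p, In p P -> (cnt (lineb g p) P * cnt (lineb g p) P <= 4 * M * M + 2 * M * Ep p)%nat).
  { intros p Hp.
    set (l := filter (lineb g p) P).
    assert (HlP : forall x, In x l -> In x P /\ dot p x = g).
    { intros x Hx. unfold l in Hx. apply filter_In in Hx. destruct Hx as [h1 h2].
      unfold lineb in h2. apply Reqb_spec in h2. auto. }
    assert (Hndl : NoDup l) by (apply NoDup_filter; auto).
    change (cnt (lineb g p) P) with (length l).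
    assert (HCS := cs_bins (bin B p) M l).
    assert (HCS' : (length l * length l <= M * cnt (fun xy => Nat.eqb (bin B p (fst xy)) (bin B p (snd xy))) (list_prod l l))%nat).
    { apply HCS. intros x Hx. apply bin_lt. apply Hsq. apply HlP; auto. }
    clear HCS.
    assert (HSB := cnt_split (fun xy => Nat.eqb (bin B p (fst xy)) (bin B p (snd xy)))
       (fun xy => pt_eqb (fst xy) (snd xy))
       (fun xy => negb (pt_eqb (fst xy) (snd xy)) && Nat.eqb (bin B p (fst xy)) (bin B p (snd xy)))
       (list_prod l l)).
    assert (HSB' : (cnt (fun xy => Nat.eqb (bin B p (fst xy)) (bin B p (snd xy))) (list_prod l l) <=
       cnt (fun xy => pt_eqb (fst xy) (snd xy)) (list_prod l l) +
       cnt (fun xy => negb (pt_eqb (fst xy) (snd xy)) && Nat.eqb (bin B p (fst xy)) (bin B p (snd xy))) (list_prod l l))%nat).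
    { apply HSB. intros x Hx. rewrite Hx. destruct (pt_eqb (fst x) (snd x)); reflexivity. }
    clear HSB.
    assert (Hdiag : (cnt (fun xy => pt_eqb (fst xy) (snd xy)) (list_prod l l) <= length l)%nat).
    { rewrite cnt_nsum, nsum_prod, <- nsum_one. apply nsum_le. intros x Hx. simpl.
      rewrite <- cnt_nsum. apply cnt_le1; auto. intros y z _ _ h1 h2.
      apply pt_eqb_spec in h1. apply pt_eqb_spec in h2. congruence. }
    assert (HD : (cnt (fun xy => negb (pt_eqb (fst xy) (snd xy)) && Nat.eqb (bin B p (fst xy)) (bin B p (snd xy))) (list_prod l l) <=
                  cnt (closeb r) (list_prod l l))%nat).
    { apply cnt_mono. intros [x y] Hxy h. apply in_prod_iff in Hxy. destruct Hxy as [Hx Hy].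
      simpl in h. apply andb_true_iff in h. destruct h as [h1 h2]. apply Nat.eqb_eq in h2.
      unfold closeb; simpl. rewrite h1. simpl. apply Rleb_spec.
      destruct (HlP x Hx) as [Hx1 Hx2]. destruct (HlP y Hy) as [Hy1 Hy2].
      apply (geom g B r p x y); auto. }
    assert (Hconv : cnt (closeb r) (list_prod l l) = Ep p) by (unfold l, Ep; apply cnt_prod_filter).
    rewrite Hconv in HD.
    set (a := length l) in *. set (e := Ep p) in *.
    set (SB := cnt _ (list_prod l l)) in HCS'.
    assert (SB <= a + e)%nat by lia.
    assert (Hm : (a * a <= M * a + M * e)%nat) by nia.
    destruct (le_lt_dec a (2 * M)) as [h|h].
    - assert (a * a <= 2 * M * a)%nat by nia. nia.
    - assert (2 * M * a < a * a)%nat by nia. nia. }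
  assert (step3 : (nsum Ep P <= cnt (closeb r) (list_prod P P))%nat).
  { unfold Ep. rewrite nsum_swap, cnt_nsum. apply nsum_le. intros [x y] Hxy. simpl.
    apply in_prod_iff in Hxy. destruct Hxy as [Hx Hy].
    destruct (closeb r (x, y)) eqn:Ec.
    - simpl. rewrite (nsum_ext _ (fun p => ib (lineb g p x && lineb g p y))).
      2:{ intros p _. rewrite andb_true_r. reflexivity. }
      rewrite <- cnt_nsum. apply cnt_le1; auto.
      intros p p' _ _ h1 h2. apply andb_true_iff in h1, h2. destruct h1 as [h1 h1'], h2 as [h2 h2'].
      unfold lineb in *. apply Reqb_spec in h1, h1', h2, h2'.
      unfold closeb in Ec; simpl in Ec. apply andb_true_iff in Ec. destruct Ec as [Ec _].
      apply (uniq_p g p p' x y); auto; try lra.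
      intro e. subst. apply negb_true_iff in Ec. rewrite (proj2 (pt_eqb_spec y y) eq_refl) in Ec. discriminate.
    - rewrite (nsum_ext _ (fun _ => 0%nat)). rewrite nsum_zero; simpl; lia.
      intros p _. rewrite andb_false_r. reflexivity. }
  apply (Nat.le_trans _ (nsum (fun p => 4 * M * M + 2 * M * Ep p) P)%nat).
  { apply nsum_le. auto. }
  assert (Hc : forall (c : nat) (l : list pt), nsum (fun _ => c) l = (c * length l)%nat).
  { intros c l; induction l; simpl; lia. }
  rewrite nsum_add, Hc, (nsum_mul_l (2 * M) Ep). fold M. nia.
Qed.

Lemma Pi_decomp g1 g2 P : Pi_card g1 g2 P = nsum (fun p => cnt (lineb g1 p) P * cnt (lineb g2 p) P)%nat P.
Proof.
  unfold Pi_card, Pi_set. change (length (filter ?h ?l)) with (cnt h l).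
  rewrite cnt_nsum, nsum_prod, nsum_prod. apply nsum_ext; intros p _.
  rewrite (cnt_nsum (lineb g1 p)), <- nsum_mul_r. apply nsum_ext; intros q _.
  rewrite cnt_nsum, <- nsum_mul_l. apply nsum_ext; intros r _.
  unfold lineb. destruct (Reqb (dot p q) g1), (Reqb (dot p r) g2); reflexivity.
Qed.

Lemma exp_le x y : x <= y -> exp x <= exp y.
Proof. intros [h|h]. apply Rlt_le, exp_increasing; auto. subst; lra. Qed.

Lemma ln_le x y : 0 < x -> x <= y -> ln x <= ln y.
Proof. intros h [h'|h']. apply Rlt_le, ln_increasing; auto. subst; lra. Qed.

Lemma Rpower_anti s d r : 0 < s -> 0 < d -> d <= r -> Rpower r (- s) <= Rpower d (- s).
Proof. intros. unfold Rpower. apply exp_le. pose proof (ln_le d r H0 H1). nra. Qed.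

Lemma norm2_pos q q' : q <> q' -> 0 < norm2 q q'.
Proof.
  destruct q as [a b], q' as [c d]. unfold norm2; simpl. intros Hne.
  apply sqrt_lt_R0.
  destruct (Rle_lt_dec ((a - c) ^ 2 + (b - d) ^ 2) 0) as [h|h]; auto.
  exfalso. apply Hne. pose proof (pow2_ge_0 (a - c)). pose proof (pow2_ge_0 (b - d)).
  assert ((a - c) ^ 2 = 0) by lra. assert ((b - d) ^ 2 = 0) by lra.
  simpl in H1, H2. rewrite Rmult_1_r in H1, H2. apply Rmult_integral in H1; apply Rmult_integral in H2.
  f_equal; lra.
Qed.

Lemma fold_sum_ge {A} (f : A -> R) (h : A -> bool) c l : 0 <= c ->
  (forall x, In x l -> 0 <= f x) -> (forall x, In x l -> h x = true -> c <= f x) ->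
  c * INR (cnt h l) <= fold_right Rplus 0 (map f l).
Proof.
  intros Hc. unfold cnt. induction l as [|a l IH]; simpl; intros H1 H2. lra.
  assert (c * INR (length (filter h l)) <= fold_right Rplus 0 (map f l)) by (apply IH; auto).
  destruct (h a) eqn:E.
  - cbn [length]. rewrite S_INR. assert (c <= f a) by (apply H2; auto). lra.
  - assert (0 <= f a) by auto. lra.
Qed.

Lemma energy_close s r P : 0 < s -> 0 < r ->
  Rpower r (- s) * INR (cnt (closeb r) (list_prod P P)) <= energy_sum s P.
Proof.
  intros Hs Hr. unfold energy_sum. apply fold_sum_ge.
  - unfold Rpower; left; apply exp_pos.
  - intros [q q'] _. simpl. destruct (pt_eqb q q'). lra. unfold Rpower; left; apply exp_pos.
  - intros [q q'] _ h. unfold closeb in h; simpl in *. apply andb_true_iff in h. destruct h as [h1 h2].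
    apply negb_true_iff in h1. rewrite h1. apply Rleb_spec in h2.
    assert (q <> q'). { intro e; subst. rewrite (proj2 (pt_eqb_spec q' q') eq_refl) in h1; discriminate. }
    apply Rpower_anti; auto. apply norm2_pos; auto.
Qed.

Lemma Cn2 n : (2 <= n)%nat -> Binomial.C n 2 = INR n * (INR n - 1) / 2.
Proof.
  intros H. destruct n as [|[|m]]; try lia. unfold Binomial.C.
  replace (S (S m) - 2)%nat with m by lia.
  change (fact (S (S m))) with (S (S m) * (S m * fact m))%nat.
  rewrite !mult_INR. change (fact 2) with 2%nat. rewrite !S_INR. simpl (INR 2).
  pose proof (INR_fact_neq_0 m). simpl (INR 0). field. auto.
Qed.

Theorem theorem3 :
  forall (s alpha beta K : R),
    3 / 2 < s <= 2 -> 0 < alpha -> 0 < beta -> 0 < K ->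
    forall (S : nat -> Prop) (Pn : nat -> list pt),
      (forall m : nat, exists n : nat, (m <= n)%nat /\ S n) ->
      (forall n : nat, S n -> s_adaptable s K n (Pn n)) ->
      exists (Cst : R) (N : nat), 0 < Cst /\ (0 < N)%nat /\
        forall n : nat, S n -> (N < n)%nat ->
          INR (Pi_card alpha beta (Pn n)) <= Cst * Rpower (INR n) (4 / 3 + 1 / s) * ln (INR n).
Proof.
  intros s alpha beta K Hs Ha Hb HK S Pn _ HP.
  exists (128 + 32 * K), 2%nat. split; [lra|]. split; [lia|].
  intros n Sn Hn.
  destruct (HP n Sn) as (Hnd & Hlen & Hsq & Hen & _).
  set (P := Pn n) in *.
  set (x := INR n).
  assert (Hx : 3 <= x) by (unfold x; replace 3 with (INR 3) by (simpl; lra); apply le_INR; lia).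
  set (L := ln x).
  assert (HL : 1 <= L).
  { unfold L. rewrite <- ln_exp at 1. apply ln_le. apply exp_pos. pose proof exp_le_3. lra. }
  assert (Hxe : x = exp L) by (unfold L; rewrite exp_ln; lra).
  set (t := Rpower x (1 / 3)).
  assert (Ht : t = exp (L / 3)) by (unfold t, Rpower; f_equal; fold L; lra).
  assert (Ht1 : 1 <= t). { rewrite Ht. rewrite <- exp_0. apply exp_le. lra. }
  destruct (archimed t) as [hu1 hu2].
  assert (Hup : (0 <= up t)%Z) by (apply le_IZR; simpl; lra).
  set (B := Z.to_nat (up t)).
  assert (HBr : INR B = IZR (up t)) by (unfold B; rewrite INR_IZR_INZ, Z2Nat.id; auto).
  set (r := 2 / t).
  assert (Hr : 0 < r) by (unfold r; apply Rdiv_lt_0_compat; lra).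
  assert (HB1 : 1 <= INR B) by lra.
  assert (Hr2 : 2 <= r ^ 2 * INR B ^ 2).
  { unfold r. replace ((2 / t) ^ 2 * INR B ^ 2) with (4 * ((INR B / t) * (INR B / t))) by (field; lra).
    assert (1 <= INR B / t). { apply (Rmult_le_reg_r t); [lra|]. unfold Rdiv. rewrite Rmult_assoc, Rinv_l by lra. lra. }
    nra. }
  assert (Hcomb : (Pi_card alpha beta P <= 8 * (B + 2) * (B + 2) * n + 4 * (B + 2) * cnt (closeb r) (list_prod P P))%nat).
  { rewrite Pi_decomp.
    pose proof (Xbound alpha B r P Ha Hnd Hsq HB1 Hr Hr2) as X1.
    pose proof (Xbound beta B r P Hb Hnd Hsq HB1 Hr Hr2) as X2.
    rewrite Hlen in X1, X2.
    assert (nsum (fun p => cnt (lineb alpha p) P * cnt (lineb beta p) P)%nat P <=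
            nsum (fun p => cnt (lineb alpha p) P * cnt (lineb alpha p) P + cnt (lineb beta p) P * cnt (lineb beta p) P)%nat P)%nat.
    { apply nsum_le. intros p _. nia. }
    rewrite nsum_add in H. lia. }
  set (Cl := cnt (closeb r) (list_prod P P)) in *.
  apply le_INR in Hcomb. rewrite !plus_INR, !mult_INR, !plus_INR in Hcomb. simpl (INR 8) in Hcomb.
  simpl (INR 4) in Hcomb. simpl (INR 2) in Hcomb. fold x in Hcomb.
  assert (HE := energy_close s r P ltac:(lra) Hr). fold Cl in HE.
  assert (Hn2 : (2 <= n)%nat) by lia.
  rewrite Cn2 in Hen by auto. fold x in Hen.
  assert (HEK : energy_sum s P <= K * (x * x / 2)).
  { assert (0 < x * (x - 1) / 2) by nra.
    assert (energy_sum s P <= K * (x * (x - 1) / 2)).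
    { apply (Rmult_le_reg_l (/ (x * (x - 1) / 2))). apply Rinv_0_lt_compat; auto.
      rewrite <- Rmult_assoc, (Rmult_comm _ K), Rmult_assoc, Rinv_l by lra. lra. }
    nra. }
  assert (Hrs : Rpower r s <= 4 * exp (- (s / 3) * L)).
  { unfold Rpower, r. unfold Rdiv. rewrite ln_mult, ln_Rinv by (try apply Rinv_0_lt_compat; lra). replace (ln t) with (L / 3) by (rewrite Ht, ln_exp; auto).
    replace (s * (ln 2 + - (L / 3))) with (s * ln 2 + - (s / 3) * L) by field. rewrite exp_plus.
    assert (exp (s * ln 2) <= 4).
    { assert (0 < ln 2) by (rewrite <- ln_1; apply ln_increasing; lra).
      replace 4 with (exp (2 * ln 2)). apply exp_le. nra.
      replace (2 * ln 2) with (ln 2 + ln 2) by ring. rewrite exp_plus, exp_ln by lra. lra. }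
    pose proof (exp_pos (- (s / 3) * L)). nra. }
  assert (HClb : INR Cl <= K * (x * x / 2) * (4 * exp (- (s / 3) * L))).
  { rewrite Rpower_Ropp in HE.
    assert (0 < Rpower r s) by (unfold Rpower; apply exp_pos).
    assert (INR Cl <= energy_sum s P * Rpower r s).
    { apply (Rmult_le_reg_l (/ Rpower r s)). apply Rinv_0_lt_compat; auto.
      rewrite (Rmult_comm (energy_sum s P)), <- Rmult_assoc, Rinv_l by lra. lra. }
    pose proof (pos_INR Cl).
    assert (0 <= energy_sum s P) by (pose proof (Rinv_0_lt_compat _ H); nra).
    assert (0 <= K * (x * x / 2)) by nra.
    apply (Rle_trans _ _ _ H0). apply Rmult_le_compat; auto. lra. }
  set (e := 4 / 3 + 1 / s).
  assert (Hu : 1 / 2 <= 1 / s /\ 7 / 3 - s / 3 <= e).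
  { unfold e. set (u := 1 / s). assert (s * u = 1) by (unfold u; field; lra).
    split; nra. }
  assert (HBt : INR B + 2 <= 4 * t) by lra.
  assert (T1 : t * t * x = exp (5 / 3 * L)).
  { rewrite Ht, Hxe. rewrite <- !exp_plus. f_equal. lra. }
  assert (T2 : t * (x * x) * exp (- (s / 3) * L) = exp ((7 / 3 - s / 3) * L)).
  { rewrite Ht, Hxe. rewrite <- !exp_plus. f_equal. lra. }
  assert (HB0 : 0 <= INR B + 2) by lra.
  assert (HCl0 : 0 <= INR Cl) by apply pos_INR.
  assert (Hx0 : 0 <= x) by lra.
  assert (S1 : INR (Pi_card alpha beta P) <= 128 * (t * t * x) + 32 * K * (t * (x * x) * exp (- (s / 3) * L))).
  { apply (Rle_trans _ _ _ Hcomb).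
    assert (8 * (INR B + 2) * (INR B + 2) * x <= 128 * (t * t * x)).
    { assert ((INR B + 2) * (INR B + 2) <= 16 * (t * t)) by nra. nra. }
    assert (4 * (INR B + 2) * INR Cl <= 4 * (4 * t) * (K * (x * x / 2) * (4 * exp (- (s / 3) * L)))).
    { apply Rmult_le_compat; try lra. }
    lra. }
  rewrite T1, T2 in S1.
  assert (E1 : exp (5 / 3 * L) <= exp (e * L)) by (apply exp_le; apply Rmult_le_compat_r; lra).
  assert (E2 : exp ((7 / 3 - s / 3) * L) <= exp (e * L)) by (apply exp_le; apply Rmult_le_compat_r; lra).
  unfold Rpower. fold L. fold e.
  pose proof (exp_pos (e * L)).
  assert (INR (Pi_card alpha beta P) <= (128 + 32 * K) * exp (e * L)) by nra.
  assert (0 < (128 + 32 * K) * exp (e * L)) by (apply Rmult_lt_0_compat; lra).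

  nra.
Qed.
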